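(* Let $A\in\mathbb{R}^{m\times N}$ with $N=pn$, let $\mathbf{x}\in\mathbb{R}^N$ be block $k$-sparse ($\lVert\mathbf{x}\rVert_{2,0}\le k$), and let $\mathbf{y}=A\mathbf{x}+\boldsymbol{\epsilon}$. For any $q\in(1,\infty]$: 1) If $\lVert\boldsymbol{\epsilon}\rVert_2\le\zeta$, then the solution $\hat{\mathbf{x}}$ of the block basis pursuit $\min_{\mathbf{z}}\lVert\mathbf{z}\rVert_{2,1}$ s.t. $\lVert\mathbf{y}-A\mathbf{z}\rVert_2\le\zeta$ obeys $$\lVert\hat{\mathbf{x}}-\mathbf{x}\rVert_{2,q}\le\frac{2\zeta}{\beta_{q,2^{\frac{q}{q-1}}k}(A)},\qquad \lVert\hat{\mathbf{x}}-\mathbf{x}\rVert_{2,1}\le\frac{4k^{1-1/q}\zeta}{\beta_{q,2^{\frac{q}{q-1}}k}(A)}.$$ 2) If $\lVert A^T\boldsymbol{\epsilon}\rVert_{2,\infty}\le\mu$, then the solution $\hat{\mathbf{x}}$ of the block Dantzig selector $\min_{\mathbf{z}}\lVert\mathbf{z}\rVert_{2,1}$ s.t. $\lVert A^T(\mathbf{y}-A\mathbf{z})\rVert_{2,\infty}\le\mu$ obeys $$\lVert\hat{\mathbf{x}}-\mathbf{x}\rVert_{2,q}\le\frac{4k^{1-1/q}}{\beta^2_{q,2^{\frac{q}{q-1}}k}(A)}\mu,\qquad \lVert\hat{\mathbf{x}}-\mathbf{x}\rVert_{2,1}\le\frac{8k^{2-2/q}}{\beta^2_{q,2^{\frac{q}{q-1}}k}(A)}\mu.$$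 3) If $\lVert A^T\boldsymbol{\epsilon}\rVert_{2,\infty}\le\kappa\mu$ for some $\kappa\in(0,1)$, then the solution $\hat{\mathbf{x}}$ of the group lasso $\min_{\mathbf{z}}\frac12\lVert\mathbf{y}-A\mathbf{z}\rVert_2^2+\mu\lVert\mathbf{z}\rVert_{2,1}$ obeys $$\lVert\hat{\mathbf{x}}-\mathbf{x}\rVert_{2,q}\le\frac{1+\kappa}{1-\kappa}\cdot\frac{2k^{1-1/q}}{\beta^2_{q,(\frac{2}{1-\kappa})^{\frac{q}{q-1}}k}(A)}\mu,\qquad \lVert\hat{\mathbf{x}}-\mathbf{x}\rVert_{2,1}\le\frac{1+\kappa}{(1-\kappa)^2}\cdot\frac{4k^{2-2/q}}{\beta^2_{q,(\frac{2}{1-\kappa})^{\frac{q}{q-1}}k}(A)}\mu.$$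
   Context: Every $\mathbf{x}\in\mathbb{R}^N$ is partitioned into $p$ consecutive blocks of length $n$: $\mathbf{x}=[\mathbf{x}_1^T,\dots,\mathbf{x}_p^T]^T$, $\mathbf{x}_i\in\mathbb{R}^n$. Mixed norms: $\lVert\mathbf{x}\rVert_{2,0}=\#\{i:\mathbf{x}_i\ne\mathbf{0}\}$, $\lVert\mathbf{x}\rVert_{2,q}=(\sum_{i=1}^p\lVert\mathbf{x}_i\rVert_2^q)^{1/q}$ for $0<q<\infty$, $\lVert\mathbf{x}\rVert_{2,\infty}=\max_i\lVert\mathbf{x}_i\rVert_2$. For nonzero $\mathbf{x}$ and $q\in(1,\infty)$, $k_q(\mathbf{x})=\left(\lVert\mathbf{x}\rVert_{2,1}/\lVert\mathbf{x}\rVert_{2,q}\right)^{q/(q-1)}$, and $k_\infty(\mathbf{x})=\lVert\mathbf{x}\rVert_{2,1}/\lVert\mathbf{x}\rVert_{2,\infty}$. For $q\in(1,\infty]$ and real $s\ge1$, $\beta_{q,s}(A)=\min_{\mathbf{z}\ne\mathbf{0},\,k_q(\mathbf{z})\le s}\lVert A\mathbf{z}\rVert_2/\lVert\mathbf{z}\rVert_{2,q}$ (the paper defines it for $s\in[1,p]$; for $s\ge p$ the constraint is vacuous since $k_q\le p$). For $q=\infty$, $q/(q-1)$ is read as $1$ and $1/q$ as $0$. The parameters $\zeta\ge0$, $\mu>0$ are given; bounds are understood as $+\infty$ when the relevant $\beta$ is $0$. *)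

(* Defs.v *)
From HB Require Import structures.
From mathcomp Require Import all_boot all_order all_algebra.
From mathcomp Require Import all_classical all_reals all_analysis.
From mathcomp Require Import zify.
Set Implicit Arguments. Unset Strict Implicit. Unset Printing Implicit Defensive.
Import Order.TTheory GRing.Theory Num.Theory.
Local Open Scope ring_scope.
Local Open Scope classical_set_scope.

Section BlockNorms.
Variable R : realType.
Variables p n : nat.

Lemma bidx_proof (i : 'I_p) (j : 'I_n) : (i * n + j < p * n)%N.
Proof. have := ltn_ord i; have := ltn_ord j; nia. Qed.

(* global index of entry j of block i : i*n + j *)
Definition bidx (i : 'I_p) (j : 'I_n) : 'I_(p * n) := Ordinal (bidx_proof i j).

Definition norm2 {k : nat} (v : 'cV[R]_k) : R := Num.sqrt (\sum_(j < k) v j 0 ^+ 2).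

Definition blk (x : 'cV[R]_(p * n)) (i : 'I_p) : 'cV[R]_n := \col_(j < n) x (bidx i j) 0.

Definition bnorm (x : 'cV[R]_(p * n)) (i : 'I_p) : R := norm2 (blk x i).

Definition norm20 (x : 'cV[R]_(p * n)) : nat := #|[set i : 'I_p | blk x i != 0]|.

Definition norm21 (x : 'cV[R]_(p * n)) : R := \sum_(i < p) bnorm x i.

(* ||x||_{2,q} for q in (0, +oo] (q an extended real); -oo is junk *)
Definition norm2q (q : \bar R) (x : 'cV[R]_(p * n)) : R :=
  match q with
  | r%:E => (\sum_(i < p) bnorm x i `^ r) `^ r^-1
  | +oo%E => \big[Num.max/0]_(i < p) bnorm x i
  | -oo%E => 0
  end.

(* q/(q-1), read as 1 for q = +oo *)
Definition qconj (q : \bar R) : R :=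
  match q with r%:E => r / (r - 1) | _ => 1 end.

(* 1/q, read as 0 for q = +oo *)
Definition qinv (q : \bar R) : R :=
  match q with r%:E => r^-1 | _ => 0 end.

Definition kq (q : \bar R) (x : 'cV[R]_(p * n)) : R :=
  (norm21 x / norm2q q x) `^ qconj q.

(* beta_{q,s}(A) : the minimum (written as the infimum, which is attained) *)
Definition beta {m : nat} (q : \bar R) (s : R) (A : 'M[R]_(m, p * n)) : R :=
  inf [set norm2 (A *m z) / norm2q q z |
        z in [set z : 'cV[R]_(p * n) | z != 0 /\ kq q z <= s]].

End BlockNorms.

(* Main.v *)
Require Import Defs.
From HB Require Import structures.
From mathcomp Require Import all_boot all_order all_algebra.
From mathcomp Require Import all_classical all_reals all_analysis.
From mathcomp Require Import ring lra.
Import Order.TTheory GRing.Theory Num.Theory.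
Local Open Scope ring_scope.

Module Helpers.
Set Implicit Arguments. Unset Strict Implicit.


Section Vec.
Variable R : realType.

Definition dot {k : nat} (u v : 'cV[R]_k) : R := \sum_(j < k) u j 0 * v j 0.

Lemma sumsq_ge0 {k : nat} (v : 'cV[R]_k) : 0 <= \sum_(j < k) v j 0 ^+ 2.
Proof. by apply: sumr_ge0 => j _; rewrite sqr_ge0. Qed.

Lemma norm2_ge0 {k : nat} (v : 'cV[R]_k) : 0 <= norm2 v.
Proof. exact: sqrtr_ge0. Qed.

Lemma norm2_sq {k : nat} (v : 'cV[R]_k) : norm2 v ^+ 2 = dot v v.
Proof. by rewrite /norm2 sqr_sqrtr ?sumsq_ge0 //; apply: eq_bigr => j _; rewrite expr2. Qed.

Lemma norm2_eq0_coef {k : nat} (v : 'cV[R]_k) j : norm2 v = 0 -> v j 0 = 0.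
Proof.
move=> h0; have : \sum_(j < k) v j 0 ^+ 2 = 0.
  by rewrite -(sqr_sqrtr (sumsq_ge0 v)) -/(norm2 v) h0 expr0n.
move=> /(psumr_eq0P (fun j _ => sqr_ge0 (v j 0))) => /(_ j isT) /eqP.
by rewrite sqrf_eq0 => /eqP.
Qed.

Lemma cauchy_schwarz {k : nat} (u v : 'cV[R]_k) : dot u v <= norm2 u * norm2 v.
Proof.
set a := norm2 u; set b := norm2 v.
have a0 : 0 <= a by exact: norm2_ge0.
have b0 : 0 <= b by exact: norm2_ge0.
have [az|anz] := eqVneq a 0.
  rewrite /dot big1 ?az ?mul0r // => j _; by rewrite (norm2_eq0_coef j az) mul0r.
have [bz|bnz] := eqVneq b 0.
  rewrite /dot big1 ?bz ?mulr0 // => j _; by rewrite (norm2_eq0_coef j bz) mulr0.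
have ap : 0 < a by rewrite lt_def anz a0.
have bp : 0 < b by rewrite lt_def bnz b0.
have H : 0 <= \sum_(j < k) (b * u j 0 - a * v j 0) ^+ 2.
  by apply: sumr_ge0 => j _; rewrite sqr_ge0.
have E : \sum_(j < k) (b * u j 0 - a * v j 0) ^+ 2
   = b ^+ 2 * dot u u - 2 * a * b * dot u v + a ^+ 2 * dot v v.
  rewrite /dot !mulr_sumr -sumrB -big_split /=; apply: eq_bigr => j _; ring.
rewrite E -!norm2_sq -/a -/b in H.
have H2 : 0 <= 2 * a * b * (a * b - dot u v) by rewrite mulrBr; lra.
rewrite pmulr_rge0 in H2; first by lra.
by rewrite !mulr_gt0.
Qed.

Lemma norm2_triangle {k : nat} (u v : 'cV[R]_k) : norm2 (u + v) <= norm2 u + norm2 v.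
Proof.
rewrite -ler_sqr ?nnegrE ?addr_ge0 ?norm2_ge0 //.
have E : dot (u + v) (u + v) = dot u u + 2 * dot u v + dot v v.
  rewrite /dot mulr_sumr -!big_split /=; apply: eq_bigr => j _.
  rewrite !mxE; ring.
rewrite norm2_sq E sqrrD -!norm2_sq.
have := cauchy_schwarz u v; lra.
Qed.

Lemma norm2N {k : nat} (v : 'cV[R]_k) : norm2 (- v) = norm2 v.
Proof. by rewrite /norm2; congr Num.sqrt; apply: eq_bigr => j _; rewrite mxE sqrrN. Qed.

Lemma norm2_0 {k : nat} : norm2 (0 : 'cV[R]_k) = 0.
Proof. by rewrite /norm2 big1 ?sqrtr0 // => j _; rewrite mxE expr0n. Qed.

Lemma norm2B {k : nat} (u v : 'cV[R]_k) : norm2 (u - v) <= norm2 u + norm2 v.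
Proof. by rewrite -(norm2N v) norm2_triangle. Qed.

Lemma dot_mx {k : nat} (u v : 'cV[R]_k) : dot u v = (u^T *m v) 0 0.
Proof. by rewrite mxE; apply: eq_bigr => j _; rewrite mxE. Qed.

Lemma dot_trmx {m k : nat} (A : 'M[R]_(m, k)) u v : dot u (A *m v) = dot (A^T *m u) v.
Proof. by rewrite !dot_mx trmx_mul trmxK mulmxA. Qed.

Lemma dotB_sq {k : nat} (u v : 'cV[R]_k) :
  dot (u - v) (u - v) = dot u u - 2 * dot u v + dot v v.
Proof.
rewrite /dot mulr_sumr -sumrB -big_split /=; apply: eq_bigr => j _.
rewrite !mxE; ring.
Qed.

End Vec.



Section Blk.
Variable R : realType.
Variables p n : nat.
Implicit Types x g h : 'cV[R]_(p * n).

Lemma blkD x g i : blk (x + g) i = blk x i + blk g i.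
Proof. by apply/matrixP => a b; rewrite !mxE. Qed.

Lemma blk0 i : blk (0 : 'cV[R]_(p * n)) i = 0.
Proof. by apply/matrixP => a b; rewrite !mxE. Qed.

Lemma bnorm_ge0 x i : 0 <= bnorm x i.
Proof. exact: norm2_ge0. Qed.

Lemma bidx_inj : injective (fun ij : 'I_p * 'I_n => bidx ij.1 ij.2).
Proof.
move=> [i j] [i' j'] /= /(congr1 val) /= E.
have hj := ltn_ord j; have hj' := ltn_ord j'.
have Ei : ((i * n + j) %/ n = (i' * n + j') %/ n)%N by rewrite E.
have Ej : ((i * n + j) %% n = (i' * n + j') %% n)%N by rewrite E.
have n0 : (0 < n)%N by apply: leq_ltn_trans hj.
rewrite !divnMDl // !divn_small // !addn0 in Ei.
rewrite !modnMDl !modn_small // in Ej.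
by congr pair; apply: val_inj.
Qed.

Lemma sum_blocks (F : 'I_(p * n) -> R) :
  \sum_(k < p * n) F k = \sum_(i < p) \sum_(j < n) F (bidx i j).
Proof.
rewrite pair_big /=.
rewrite (reindex (fun ij : 'I_p * 'I_n => bidx ij.1 ij.2)) //=.
apply: onW_bij; apply: inj_card_bij; first exact: bidx_inj.
by rewrite card_prod !card_ord.
Qed.

Lemma dot_blocks g h : dot g h = \sum_(i < p) dot (blk g i) (blk h i).
Proof.
rewrite /dot sum_blocks; apply: eq_bigr => i _; apply: eq_bigr => j _.
by rewrite !mxE.
Qed.

Lemma bnorm_le_max x i : bnorm x i <= norm2q +oo%E x.
Proof. rewrite /=. exact: le_bigmax. Qed.

Lemma max_ge0 x : 0 <= norm2q +oo%E x.
Proof.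
rewrite /=; elim/big_ind: _ => //.
  by move=> a b a0 b0; rewrite le_max a0.
by move=> i _; exact: bnorm_ge0.
Qed.

Lemma dot_le g h : dot g h <= norm2q +oo%E g * norm21 h.
Proof.
rewrite dot_blocks /norm21 mulr_sumr; apply: ler_sum => i _.
apply: le_trans (cauchy_schwarz _ _) _.
by apply: ler_wpM2r; [exact: bnorm_ge0 | exact: bnorm_le_max].
Qed.

Lemma max_triangle x g : norm2q +oo%E (x + g) <= norm2q +oo%E x + norm2q +oo%E g.
Proof.
rewrite [X in X <= _]/=; apply: bigmax_le; first by rewrite addr_ge0 ?max_ge0.
move=> i _; rewrite /bnorm blkD; apply: le_trans (norm2_triangle _ _) _.
by apply: lerD; exact: bnorm_le_max.
Qed.

Lemma maxN x : norm2q +oo%E (- x) = norm2q +oo%E x.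
Proof.
rewrite /=; apply: eq_bigr => i _; rewrite /bnorm -(norm2N (blk x i)).
have -> : blk (- x) i = - blk x i by apply/matrixP => a b; rewrite !mxE.
by [].
Qed.

Lemma norm21_0 : norm21 (0 : 'cV[R]_(p * n)) = 0.
Proof. by rewrite /norm21 big1 // => i _; rewrite /bnorm blk0 norm2_0. Qed.

Lemma norm21_ge0 x : 0 <= norm21 x.
Proof. by apply: sumr_ge0 => i _; exact: bnorm_ge0. Qed.

Lemma norm2q_0 q : (1 < q)%E -> norm2q q (0 : 'cV[R]_(p * n)) = 0.
Proof.
case: q => [r||] //=.
  rewrite lte_fin => r1.
  rewrite big1 ?powR0 // ?invr_eq0 ?gt_eqF //; first by lra.
  by move=> i _; rewrite /bnorm blk0 norm2_0 powR0 // gt_eqF //; lra.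
move=> _; elim/big_ind: _ => //; first by move=> a b -> ->; rewrite maxxx.
by move=> i _; rewrite /bnorm blk0 norm2_0.
Qed.

Lemma norm2q_ge0 q x : (1 < q)%E -> 0 <= norm2q q x.
Proof.
case: q => [r||] //= _; first exact: powR_ge0.
exact: (max_ge0 x).
Qed.

End Blk.



Section PM.
Variable R : realType.

Lemma power_mean (I : finType) (S : {set I}) (f : I -> R) (r : R) :
  1 < r -> (forall i, 0 <= f i) ->
  \sum_(i in S) f i <= #|S|%:R `^ (1 - r^-1) * (\sum_i f i `^ r) `^ r^-1.
Proof.
move=> r1 f0.
have r0 : 0 < r by lra.
have rnz : r != 0 by rewrite gt_eqF.
set G := \sum_i f i `^ r.
have G0 : 0 <= G by apply: sumr_ge0 => i _; exact: powR_ge0.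
set T := G `^ r^-1; set c := #|S|%:R.
have [T0|Tnz] := eqVneq T 0.
  have G00 : G = 0 by apply: (powR_eq0_eq0 T0).
  rewrite T0 mulr0 big1 // => i _.
  have := psumr_eq0P (fun i _ => powR_ge0 (f i) r) G00 (i:=i) isT.
  by move/eqP; rewrite powR_eq0 rnz andbT => /eqP.
have [c0|cnz] := eqVneq #|S| 0%N.
  move/eqP: c0; rewrite cards_eq0 => /eqP ->; rewrite big_set0.
  by rewrite mulr_ge0 ?powR_ge0.
have cp : 0 < c by rewrite ltr0n lt0n.
have Tp : 0 < T by rewrite lt_def Tnz powR_ge0.
have Gp : 0 < G by rewrite lt_def G0 andbT; apply: contra Tnz; rewrite /T => /eqP ->; rewrite powR0 // invr_eq0.
set lam := c `^ r^-1 * T^-1.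
have lamp : 0 < lam by rewrite mulr_gt0 ?invr_gt0 ?powR_gt0.
have TG : T `^ r = G by rewrite /T -powRrM mulVf // powRr1.
have cr : (c `^ r^-1) `^ r = c by rewrite -powRrM mulVf // powRr1 // ltW.
have Tinv : (T^-1) `^ r = G^-1.
  by rewrite -powR_inv1 ?(ltW Tp) // -powRrM mulN1r powRN TG.
have lamr : forall i, (lam * f i) `^ r = c * G^-1 * f i `^ r.
  move=> i; rewrite powRM ?mulr_ge0 ?powR_ge0 ?invr_ge0 ?(ltW Tp) //.
  by rewrite powRM ?powR_ge0 ?invr_ge0 ?(ltW Tp) // cr Tinv.
set r' := r / (r - 1).
have r'p : 0 < r' by rewrite divr_gt0 //; lra.
have r1nz : r - 1 != 0 by rewrite subr_eq0 gt_eqF.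
have rr : r^-1 + r'^-1 = 1 by rewrite /r' invf_div; field.
have Y : forall i, lam * f i <= (lam * f i) `^ r / r + r'^-1.
  move=> i; have := @conjugate_powR _ (lam * f i) 1 r r'.
  rewrite mulr1 powR1 div1r; apply => //; first by rewrite mulr_ge0 // ltW.
have S1 : \sum_(i in S) (lam * f i) `^ r <= c.
  under eq_bigr do rewrite lamr.
  rewrite -mulr_sumr; apply: le_trans (_ : c * G^-1 * G <= c); last by rewrite mulfVK // gt_eqF.
  apply: ler_wpM2l; first by rewrite mulr_ge0 ?invr_ge0 // ltW.
  rewrite /G [X in _ <= X](bigID (fun i => i \in S)) /= lerDl.
  by apply: sumr_ge0 => i _; exact: powR_ge0.
have S2 : lam * \sum_(i in S) f i <= c.
  rewrite mulr_sumr; apply: le_trans (ler_sum _ (fun i _ => Y i)) _.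
  rewrite big_split /= -mulr_suml sumr_const -/c.
  have : r'^-1 = 1 - r^-1 by lra.
  move=> ->.
  have : (\sum_(i in S) (lam * f i) `^ r) / r <= c / r.
    by rewrite ler_pM2r ?invr_gt0.
  have : c *+ 1 = c by [].
  rewrite -mulr_natr mulr1n; move=> _.
  rewrite -[(1 - r^-1) *+ _]mulr_natr mulrC -/c. 
  move=> H; have : c / r + c * (1 - r^-1) = c by field.
  lra.
have -> : #|S|%:R `^ (1 - r^-1) = c / c `^ r^-1.
  by rewrite powRB ?powRr1 ?(ltW cp) //; apply/implyP => _; rewrite gt_eqF.
have S3 : \sum_(i in S) f i <= c / lam by rewrite ler_pdivlMr // mulrC.
by apply: (le_trans S3); rewrite /lam invfM invrK mulrA.
Qed.

End PM.



Section B4.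
Variable R : realType.
Variables p n : nat.
Implicit Types x h : 'cV[R]_(p * n).

Definition supp x : {set 'I_p} := [set i : 'I_p | blk x i != 0].

Lemma norm20_supp x : norm20 x = #|supp x|.
Proof. rewrite /norm20 /supp; apply: eq_card => i; rewrite !inE /=. by apply/idP/idP; rewrite in_setE. Qed.

Lemma norm21_split x (S : {set 'I_p}) :
  norm21 x = \sum_(i in S) bnorm x i + \sum_(i | i \notin S) bnorm x i.
Proof. by rewrite /norm21 (bigID (fun i => i \in S)). Qed.

Lemma cone x h :
  norm21 x - \sum_(i in supp x) bnorm h i + \sum_(i | i \notin supp x) bnorm h i
  <= norm21 (x + h).
Proof.
rewrite (norm21_split x (supp x)) (norm21_split (x + h) (supp x)).
have Z : forall i, i \notin supp x -> blk x i = 0.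
  by move=> i; rewrite inE negbK => /eqP.
have -> : \sum_(i | i \notin supp x) bnorm x i = 0.
  by rewrite big1 // => i /Z; rewrite /bnorm => ->; rewrite norm2_0.
have -> : \sum_(i | i \notin supp x) bnorm (x + h) i = \sum_(i | i \notin supp x) bnorm h i.
  by apply: eq_bigr => i /Z; rewrite /bnorm blkD => ->; rewrite add0r.
have : \sum_(i in supp x) bnorm x i - \sum_(i in supp x) bnorm h i
       <= \sum_(i in supp x) bnorm (x + h) i.
  rewrite -sumrB; apply: ler_sum => i _; rewrite lerBlDr /bnorm.
  have -> : blk x i = blk (x + h) i - blk h i.
    by rewrite blkD addrK.
  exact: norm2B.
lra.
Qed.

Lemma holder_blk q h (S : {set 'I_p}) (k : nat) :
  (1 < q)%E -> (0 < k)%N -> (#|S| <= k)%N ->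
  \sum_(i in S) bnorm h i <= k%:R `^ (1 - qinv q) * norm2q q h.
Proof.
case: q => [r||] //=; last first.
  move=> _ _ Sk; rewrite subr0 powRr1 ?ler0n //.
  apply: le_trans (_ : \sum_(i in S) norm2q +oo%E h <= _).
    by apply: ler_sum => i _; exact: bnorm_le_max.
  rewrite sumr_const -[_ *+ #|S|]mulr_natl; apply: ler_wpM2r; first exact: max_ge0.
  by rewrite ler_nat.
rewrite lte_fin => r1 k0 Sk.
have /= PM := @power_mean R _ S (fun i => bnorm h i) r r1 (fun i => bnorm_ge0 h i).
apply: (le_trans PM).
apply: ler_wpM2r; first exact: powR_ge0.
apply: ge0_ler_powR; rewrite ?nnegrE ?ler0n ?ler_nat //.
rewrite subr_ge0 invf_le1; lra.
Qed.

Lemma qconj_gt0 (q : \bar R) : (1 < q)%E -> 0 < qconj q.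
Proof. by case: q => [r||] //=; rewrite lte_fin => r1; rewrite divr_gt0 //; lra. Qed.

Lemma qconj_mul (q : \bar R) : (1 < q)%E -> (1 - qinv q) * qconj q = 1.
Proof.
case: q => [r||] //=; last by rewrite subr0 mulr1.
rewrite lte_fin => r1.
have r0 : r != 0 by rewrite gt_eqF //; lra.
have r1nz : r - 1 != 0 by rewrite subr_eq0 gt_eqF.
by field; rewrite r0 r1nz.
Qed.

Lemma kq_bound q h (k : nat) (C : R) :
  (1 < q)%E -> 0 < C ->
  norm21 h <= C * k%:R `^ (1 - qinv q) * norm2q q h ->
  kq q h <= C `^ qconj q * k%:R.
Proof.
move=> q1 C0 H; rewrite /kq.
have Q0 := norm2q_ge0 h q1.
have qc := qconj_gt0 q1.
have [Qz|Qnz] := eqVneq (norm2q q h) 0.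
  by rewrite Qz invr0 mulr0 powR0 ?gt_eqF // mulr_ge0 ?powR_ge0.
have Qp : 0 < norm2q q h by rewrite lt_def Qnz Q0.
have K0 : 0 <= k%:R `^ (1 - qinv q) :> R by exact: powR_ge0.
apply: le_trans (_ : (C * k%:R `^ (1 - qinv q)) `^ qconj q <= _).
  apply: ge0_ler_powR; rewrite ?nnegrE ?(ltW qc) ?divr_ge0 ?norm21_ge0 ?mulr_ge0 ?(ltW C0) //.
  by rewrite ler_pdivrMr.
rewrite powRM ?(ltW C0) // -powRrM qconj_mul // powRr1 ?ler0n //.
Qed.

Lemma beta_le {m : nat} q s (A : 'M[R]_(m, p * n)) z :
  (1 < q)%E -> z != 0 -> kq q z <= s ->
  beta q s A <= norm2 (A *m z) / norm2q q z.
Proof.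
move=> q1 z0 ks; rewrite /beta; apply: ge_inf; last by exists z.
exists 0 => _ [z' _ <-]; rewrite divr_ge0 ?norm2_ge0 ?norm2q_ge0 //.
Qed.

Lemma beta_use {m : nat} q s (A : 'M[R]_(m, p * n)) z :
  (1 < q)%E -> z != 0 -> kq q z <= s -> 0 < beta q s A ->
  0 < norm2q q z /\ beta q s A * norm2q q z <= norm2 (A *m z).
Proof.
move=> q1 z0 ks b0; have := beta_le A q1 z0 ks.
have Q0 := norm2q_ge0 z q1.
have [Qz|Qnz] := eqVneq (norm2q q z) 0.
  by rewrite Qz invr0 mulr0 => /(lt_le_trans b0); rewrite ltxx.
have Qp : 0 < norm2q q z by rewrite lt_def Qnz Q0.
by rewrite ler_pdivlMr // => ->.
Qed.

End B4.



Section B5.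
Variable R : realType.
Variables p n : nat.

Lemma core {m : nat} (q : \bar R) (A : 'M[R]_(m, p * n)) (x hh : 'cV[R]_(p * n)) (k : nat) (C : R) :
  (1 < q)%E -> (0 < k)%N -> (norm20 x <= k)%N -> 0 < C ->
  norm21 hh <= C * \sum_(i in supp x) bnorm hh i ->
  0 < beta q (C `^ qconj q * k%:R) A -> hh != 0 ->
  [/\ 0 < norm2q q hh,
      beta q (C `^ qconj q * k%:R) A * norm2q q hh <= norm2 (A *m hh),
      norm21 hh <= C * k%:R `^ (1 - qinv q) * norm2q q hh &
      \sum_(i in supp x) bnorm hh i <= k%:R `^ (1 - qinv q) * norm2q q hh].
Proof.
move=> q1 k0 kx C0 Hc B0 hnz.
have Ho : \sum_(i in supp x) bnorm hh i <= k%:R `^ (1 - qinv q) * norm2q q hh.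
  by apply: holder_blk => //; rewrite -norm20_supp.
have H1 : norm21 hh <= C * k%:R `^ (1 - qinv q) * norm2q q hh.
  by apply: (le_trans Hc); rewrite -mulrA ler_wpM2l // ltW.
have [Qp BQ] := beta_use (A:=A) q1 hnz (kq_bound q1 C0 H1) B0.
by split.
Qed.

Lemma Ksq (q : \bar R) (k : nat) : (0 < k)%N ->
  k%:R `^ (1 - qinv q) ^+ 2 = k%:R `^ (2 - 2 * qinv q) :> R.
Proof.
move=> k0; rewrite expr2 -powRD; first by congr powR; ring.
by apply/implyP => _; rewrite pnatr_eq0 -lt0n.
Qed.

End B5.

Section Arith.
Variable R : realType.

Lemma arith_Q (B Q X : R) : 0 < B -> 0 < Q -> (B * Q) ^+ 2 <= X * Q -> Q <= X / B ^+ 2.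
Proof.
move=> B0 Q0 H.
have B2 : 0 < B ^+ 2 by rewrite exprn_gt0.
rewrite ler_pdivlMr //.
have : (Q * B ^+ 2) * Q <= X * Q by rewrite (_ : Q * B ^+ 2 * Q = (B * Q) ^+ 2) //; ring.
by rewrite ler_pM2r.
Qed.

End Arith.

Section Arith2.
Variable R : realType.
Lemma le_div1 (W t : R) : 0 <= W -> 0 < t -> t <= 1 -> W <= W / t.
Proof.
move=> W0 t0 t1; rewrite ler_pdivlMr //.
have := ler_wpM2l W0 t1; by rewrite mulr1.
Qed.
End Arith2.

End Helpers.
Import Helpers.


Theorem theorem1 (R : realType) (m p n k : nat) (A : 'M[R]_(m, p * n))
  (x : 'cV[R]_(p * n)) (eps : 'cV[R]_m) (zeta mu kappa : R) (q : \bar R) :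
  (0 < k)%N -> (norm20 x <= k)%N ->
  0 <= zeta -> 0 < mu -> (1 < q)%E ->
  let y := A *m x + eps in
  let h := fun xh : 'cV[R]_(p * n) => xh - x in
  let b := beta q (2 `^ qconj q * k%:R) A in
  let bl := beta q ((2 / (1 - kappa)) `^ qconj q * k%:R) A in
  (* 1) block basis pursuit *)
  (norm2 eps <= zeta ->
   forall xh : 'cV[R]_(p * n),
     norm2 (y - A *m xh) <= zeta ->
     (forall z : 'cV[R]_(p * n), norm2 (y - A *m z) <= zeta ->
        norm21 xh <= norm21 z) ->
     0 < b ->
     norm2q q (h xh) <= 2 * zeta / b /\
     norm21 (h xh) <= 4 * k%:R `^ (1 - qinv q) * zeta / b) /\
  (* 2) block Dantzig selector *)
  (norm2q +oo%E (A^T *m eps) <= mu ->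
   forall xh : 'cV[R]_(p * n),
     norm2q +oo%E (A^T *m (y - A *m xh)) <= mu ->
     (forall z : 'cV[R]_(p * n), norm2q +oo%E (A^T *m (y - A *m z)) <= mu ->
        norm21 xh <= norm21 z) ->
     0 < b ->
     norm2q q (h xh) <= 4 * k%:R `^ (1 - qinv q) / b ^+ 2 * mu /\
     norm21 (h xh) <= 8 * k%:R `^ (2 - 2 * qinv q) / b ^+ 2 * mu) /\
  (* 3) group lasso *)
  (0 < kappa < 1 ->
   norm2q +oo%E (A^T *m eps) <= kappa * mu ->
   forall xh : 'cV[R]_(p * n),
     (forall z : 'cV[R]_(p * n),
        2^-1 * norm2 (y - A *m xh) ^+ 2 + mu * norm21 xh
        <= 2^-1 * norm2 (y - A *m z) ^+ 2 + mu * norm21 z) ->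
     0 < bl ->
     norm2q q (h xh) <=
       (1 + kappa) / (1 - kappa) * (2 * k%:R `^ (1 - qinv q) / bl ^+ 2) * mu /\
     norm21 (h xh) <=
       (1 + kappa) / (1 - kappa) ^+ 2 * (4 * k%:R `^ (2 - 2 * qinv q) / bl ^+ 2) * mu).
Proof.
move=> k0 kx z0 mu0 q1 y h b bl.
rewrite /h.
set K := k%:R `^ (1 - qinv q).
have K0 : 0 <= K by exact: powR_ge0.
have Ex : y - A *m x = eps by rewrite /y addrAC subrr add0r.
have cone' : forall xh, norm21 x - \sum_(i in supp x) bnorm (xh - x) i
    + \sum_(i | i \notin supp x) bnorm (xh - x) i <= norm21 xh.
  by move=> xh; have := cone x (xh - x); rewrite [x + _]addrC subrK.
have spl : forall hh : 'cV[R]_(p * n), norm21 hh = \sum_(i in supp x) bnorm hh i + \sum_(i | i \notin supp x) bnorm hh i.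
  by move=> hh; rewrite (@norm21_split R p n hh (supp x)).
have EA : forall xh, A *m (xh - x) = (y - A *m x) - (y - A *m xh).
  by move=> xh; rewrite mulmxBr opprB [RHS]addrC [RHS]addrA subrK.
split; [|split].
- move=> He xh Hf Hopt b0.
  have Hn : norm21 xh <= norm21 x by apply: Hopt; rewrite Ex.
  have := cone' xh; have := spl (xh - x).
  set hh := xh - x; set a := \sum_(i in supp x) bnorm hh i; set d := \sum_(i | _) _.
  move=> E1 E2.
  have Hc : norm21 hh <= 2 * a by lra.
  have [hz|hnz] := eqVneq hh 0.
    rewrite hz norm2q_0 // norm21_0; split; rewrite ?divr_ge0 ?mulr_ge0 ?(ltW b0) //.
  have two0 : (0:R) < 2 by lra.
  have [Qp BQ H1 Ho] := core (A:=A) q1 k0 kx two0 Hc b0 hnz.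
  have HN : norm2 (A *m hh) <= 2 * zeta.
    rewrite /hh EA; apply: le_trans (norm2B _ _) _; rewrite Ex; lra.
  rewrite -/b in BQ H1 *.
  set Q := norm2q q hh in Qp BQ H1 *.
  split.
    by rewrite ler_pdivlMr // mulrC; lra.
  rewrite ler_pdivlMr //.
  have := ler_wpM2r (ltW b0) H1; have := ler_wpM2l K0 (le_trans BQ HN).
  rewrite -/K in H1 *.
  nra.
- move=> He xh Hf Hopt b0.
  have Hn : norm21 xh <= norm21 x by apply: Hopt; rewrite Ex.
  have := cone' xh; have := spl (xh - x).
  set hh := xh - x; set a := \sum_(i in supp x) bnorm hh i; set d := \sum_(i | _) _.
  move=> E1 E2.
  have Hc : norm21 hh <= 2 * a by lra.
  have [hz|hnz] := eqVneq hh 0.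
    rewrite hz norm2q_0 // norm21_0; split; rewrite ?mulr_ge0 ?divr_ge0 ?exprn_ge0 ?(ltW b0) ?powR_ge0 ?(ltW mu0) ?invr_ge0 ?exprn_ge0 ?(ltW b0) //.
  have two0 : (0:R) < 2 by lra.
  have [Qp BQ H1 Ho] := core (A:=A) q1 k0 kx two0 Hc b0 hnz.
  rewrite -/b -/K in BQ H1 Ho *.
  set Q := norm2q q hh in Qp BQ H1 Ho *.
  have HM : norm2q +oo%E (A^T *m (A *m hh)) <= 2 * mu.
    rewrite /hh EA mulmxBr Ex; apply: le_trans (max_triangle _ _) _.
    rewrite maxN; lra.
  have HN2 : norm2 (A *m hh) ^+ 2 <= 2 * mu * norm21 hh.
    rewrite norm2_sq dot_trmx; apply: le_trans (dot_le _ _) _.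
    by apply: ler_wpM2r => //; exact: norm21_ge0.
  have N0 : 0 <= norm2 (A *m hh) by exact: norm2_ge0.
  have BQ2 : (b * Q) ^+ 2 <= (4 * K * mu) * Q.
    apply: le_trans (_ : norm2 (A *m hh) ^+ 2 <= _).
      by rewrite ler_sqr ?nnegrE ?mulr_ge0 ?(ltW b0) ?(ltW Qp).
    apply: (le_trans HN2).
    have m2 : 0 <= 2 * mu by lra.
    have H3 := ler_wpM2l m2 H1.
    have : 2 * mu * (2 * K * Q) = 4 * K * mu * Q by ring.
    lra.
  have HQ := arith_Q b0 Qp BQ2.
  split; first by rewrite mulrAC.
  rewrite -Ksq // -/K.
  have Ho' : a <= K * Q := Ho.
  apply: (le_trans Hc); apply: le_trans (_ : 2 * (K * Q) <= _); first by lra.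
  have := ler_wpM2l K0 HQ => H2.
  have : K * (4 * K * mu / b ^+ 2) = 4 * K ^+ 2 / b ^+ 2 * mu.
    by have bnz : b != 0 := lt0r_neq0 b0; field; exact: bnz.
  lra.
- move=> /andP[ka0 ka1] He xh Hopt b0.
  have Hl := Hopt x; rewrite Ex in Hl.
  have := cone' xh; have := spl (xh - x).
  have E3 : y - A *m xh = eps - A *m (xh - x).
    by rewrite EA Ex opprB [RHS]addrC subrK.
  rewrite E3 in Hl.
  set hh := xh - x in E3 Hl *; set a := \sum_(i in supp x) bnorm hh i; set d := \sum_(i | _) _.
  move=> E1 E2.
  have a0 : 0 <= a by apply: sumr_ge0 => i _; exact: bnorm_ge0.
  have d0 : 0 <= d by apply: sumr_ge0 => i _; exact: bnorm_ge0.
  have Hsq : norm2 (eps - A *m hh) ^+ 2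
      = norm2 eps ^+ 2 - 2 * dot eps (A *m hh) + norm2 (A *m hh) ^+ 2.
    by rewrite !norm2_sq dotB_sq.
  have Hdot : dot eps (A *m hh) <= kappa * mu * norm21 hh.
    rewrite dot_trmx; apply: le_trans (dot_le _ _) _.
    by apply: ler_wpM2r => //; exact: norm21_ge0.
  set N2 := norm2 (A *m hh) ^+ 2 in Hsq *.
  have N20 : 0 <= N2 by rewrite /N2 exprn_ge0 // norm2_ge0.
  have Hmu : mu * (norm21 x - norm21 xh) <= mu * (a - d).
    by apply: ler_wpM2l; [exact: ltW | lra].
  have HK : 2^-1 * N2 <= mu * ((1 + kappa) * a - (1 - kappa) * d).
    rewrite Hsq in Hl.
    have : kappa * mu * norm21 hh + mu * (a - d) = mu * ((1 + kappa) * a - (1 - kappa) * d).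
      by rewrite E1; ring.
    lra.
  have Hpos : 0 <= (1 + kappa) * a - (1 - kappa) * d.
    have : 0 <= mu * ((1 + kappa) * a - (1 - kappa) * d) by lra.
    by rewrite pmulr_rge0.
  have k1 : 0 < 1 - kappa by lra.
  set C := 2 / (1 - kappa).
  have C0 : 0 < C by rewrite divr_gt0 //; lra.
  have Hc : norm21 hh <= C * a.
    rewrite /C mulrAC ler_pdivlMr // E1.
    have : (1 - kappa) * d <= (1 + kappa) * a by lra.
    have : (a + d) * (1 - kappa) = (1 - kappa) * a + (1 - kappa) * d by ring.
    have : 2 * a = (1 - kappa) * a + (1 + kappa) * a by ring.
    lra.
  have [hz|hnz] := eqVneq hh 0.
    have kp : 0 <= 1 + kappa by lra.
    rewrite hz norm2q_0 // norm21_0; split; rewrite ?mulr_ge0 ?divr_ge0 ?exprn_ge0 ?(ltW b0) ?powR_ge0 ?(ltW mu0) ?invr_ge0 ?exprn_ge0 ?(ltW b0) ?(ltW k1) //.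
  have [Qp BQ H1 Ho] := core (A:=A) q1 k0 kx C0 Hc b0 hnz.
  rewrite -/bl -/K in BQ H1 Ho *.
  set Q := norm2q q hh in Qp BQ H1 Ho *.
  have Ho' : a <= K * Q := Ho.
  have N0 : 0 <= norm2 (A *m hh) by exact: norm2_ge0.
  have BQ2 : (bl * Q) ^+ 2 <= (2 * (1 + kappa) * K * mu) * Q.
    apply: le_trans (_ : N2 <= _).
      by rewrite /N2 ler_sqr ?nnegrE ?mulr_ge0 ?(ltW b0) ?(ltW Qp).
    have : (1 - kappa) * mu * d >= 0 by rewrite !mulr_ge0 // ?(ltW k1) ?(ltW mu0).
    have m2 : 0 <= 2 * (1 + kappa) * mu by rewrite !mulr_ge0 //; lra.
    have H3 := ler_wpM2l m2 Ho'.
    have : 2 * (1 + kappa) * mu * (K * Q) = 2 * (1 + kappa) * K * mu * Q by ring.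
    have : mu * ((1 + kappa) * a - (1 - kappa) * d) = (1 + kappa) * mu * a - (1 - kappa) * mu * d by ring.
    have : 2 * (1 + kappa) * mu * a = 2 * ((1 + kappa) * mu * a) by ring.
    lra.
  have HQ := arith_Q b0 Qp BQ2.
  have bnz : bl != 0 := lt0r_neq0 b0.
  have knz : 1 - kappa != 0 := lt0r_neq0 k1.
  have W0 : 0 <= 2 * (1 + kappa) * K * mu / bl ^+ 2.
    by rewrite divr_ge0 ?exprn_ge0 ?(ltW b0) // !mulr_ge0 // ?(ltW mu0); lra.
  have k11 : 1 - kappa <= 1 by lra.
  split.
    apply: (le_trans HQ); apply: le_trans (le_div1 W0 k1 k11) _.
    by rewrite le_eqVlt; apply/orP; left; apply/eqP; field; rewrite bnz knz.
  rewrite -Ksq // -/K.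
  have CK : 0 <= C * K by rewrite mulr_ge0 // ltW.
  apply: (le_trans H1); apply: le_trans (ler_wpM2l CK HQ) _.
  have V0 : 0 <= C * K * (2 * (1 + kappa) * K * mu / bl ^+ 2) by rewrite mulr_ge0.
  apply: le_trans (le_div1 V0 k1 k11) _.
  by rewrite le_eqVlt; apply/orP; left; apply/eqP; rewrite /C; field; rewrite bnz knz.
Qed.
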